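(* Let $X=(X_1,\ldots,X_p)^\top$ follow the linear structural equation model $$X_j = \Psi_j + \sum_{k \in \mathrm{PA}(j)} \theta_{j,k} X_k, \qquad j=1,\ldots,p,$$ as described in the context. Fix $j\in\{1,\ldots,p\}$ and a function $f:\mathbb{R}\to\mathbb{R}$, and let $$\beta^{f,j} := E(XX^\top)^{-1} E\{X f(X_j)\} \in \mathbb{R}^p$$ be the population ordinary least squares coefficient of the regression of $f(X_j)$ on all of $X$ (including $X_j$ itself); assume it exists. Then $$\beta^{f,j}_k = 0 \quad \text{for all } k \notin \mathrm{AN}(j)\cup\{j\}.$$
   Context: In the model, $\Psi_1,\ldots,\Psi_p$ are independent, centered random variables with $0<\mathrm{var}(\Psi_j)=\sigma_j^2<\infty$ for all $j$, so that the covariance matrix of $X$ exists and has full rank. The parent sets $\mathrm{PA}(j)\subseteq\{1,\ldots,p\}\setminus\{j\}$ are those of a directed acyclic graph (DAG) on $\{1,\ldots,p\}$ with edges $k\to j$ for $k\in\mathrm{PA}(j)$, and $\theta_{j,k}$ are real coefficients. $\mathrm{AN}(j)$ denotes the set of ancestors of $j$ in this DAG, i.e. the nodes with a directed path to $j$. *)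

(* Defs.v *)
From HB Require Import structures.
From mathcomp Require Import all_boot all_order all_algebra.
From mathcomp Require Import all_classical all_reals all_analysis.
Set Implicit Arguments. Unset Strict Implicit. Unset Printing Implicit Defensive.
Import Order.TTheory GRing.Theory Num.Theory.
Local Open Scope classical_set_scope.
Local Open Scope ring_scope.

Definition mutually_independent d (T : measurableType d) (R : realType)
  (P : probability T R) (p : nat) (Y : 'I_p -> T -> R) : Prop :=
  (forall i, measurable_fun setT (Y i)) /\
  forall (J : {set 'I_p}) (B : 'I_p -> set R),
    (forall i, measurable (B i)) ->
    P (\big[setI/setT]_(i in J) (Y i @^-1` B i)) =
    (\prod_(i in J) P (Y i @^-1` B i))%E.

(* The DAG given by parent sets: pa j k  <=>  k \in PA(j), i.e. edge k -> j. *)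
Definition dag_edge (p : nat) (pa : 'I_p -> 'I_p -> bool) : rel 'I_p :=
  fun k j => pa j k.

Definition acyclic (p : nat) (pa : 'I_p -> 'I_p -> bool) : Prop :=
  forall j k, dag_edge pa j k -> ~~ connect (dag_edge pa) k j.

Definition ancestor (p : nat) (pa : 'I_p -> 'I_p -> bool) (k j : 'I_p) : bool :=
  [exists i, dag_edge pa k i && connect (dag_edge pa) i j].

Definition second_moment d (T : measurableType d) (R : realType)
  (P : probability T R) (p : nat) (X : 'I_p -> T -> R) : 'M[R]_p :=
  \matrix_(k, l) fine ('E_P[X k \* X l]).

Definition cross_moment d (T : measurableType d) (R : realType)
  (P : probability T R) (p : nat) (X : 'I_p -> T -> R) (f : R -> R) (j : 'I_p)
  : 'cV[R]_p :=
  \col_k fine ('E_P[X k \* (f \o X j)]).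

Definition ols_coef d (T : measurableType d) (R : realType)
  (P : probability T R) (p : nat) (X : 'I_p -> T -> R) (f : R -> R) (j : 'I_p)
  : 'cV[R]_p :=
  invmx (second_moment P X) *m cross_moment P X f j.

(* Main.v *)
Require Import Defs.
From HB Require Import structures.
From mathcomp Require Import all_boot all_order all_algebra.
From mathcomp Require Import all_classical all_reals all_analysis.
From mathcomp Require Import measurable_realfun.
From mathcomp Require Import lra.
Import Order.TTheory GRing.Theory Num.Theory.
Local Open Scope classical_set_scope.
Local Open Scope ring_scope.

Set Implicit Arguments. Unset Strict Implicit. Unset Printing Implicit Defensive.

Section Dyn.
Local Open Scope ereal_scope.
Context d (T : measurableType d) (R : realType) (P : probability T R).

Lemma indep_lambda (E : set T) (G : set (set T)) :
  measurable E -> setI_closed G -> G `<=` measurable ->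
  (forall A, G A -> P (E `&` A) = P E * P A) ->
  forall A, <<s G >> A -> P (E `&` A) = P E * P A.
Proof.
move=> mE GI Gm GP.
set H := [set A | measurable A /\ P (E `&` A) = P E * P A].
suff: <<s G >> `<=` H by move=> h A /h [].
have finP (A : set T) : measurable A -> P A \is a fin_num.
  by move=> mA; apply: fin_num_measure.
have Plty (A : set T) : measurable A -> P A < +oo.
  by move=> mA; rewrite -ge0_fin_numE ?finP.
apply: lambda_system_subset => //; last first.
  by move=> A GA; split; [exact: Gm|exact: GP].
split.
- by [].
- by split => //; rewrite setIT probability_setT mule1.
- move=> A B BA [mA PA] [mB PB]; split; first exact: measurableD.
  rewrite setIDA measureD; [|exact: measurableI|by []|].
    rewrite -setIA (setIidr BA).
    transitivity (P E * P A - P E * P B); first by rewrite -PA -PB.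
    rewrite -muleBr; last by rewrite fin_num_adde_defl // fin_numN finP.
    by rewrite [P (A `\` B)]measureD ?(setIidr BA) //; apply: Plty.
  - exact: finP.
  - by apply: Plty; exact: measurableI.
- move=> F ndF HF; split.
    by apply: bigcupT_measurable => i; case: (HF i).
  have mF i : measurable (F i) by case: (HF i).
  have c1 : P \o F @ \oo --> P (\bigcup_n F n) :=
    nondecreasing_cvg_mu mF ltac:(by apply: bigcupT_measurable) ndF.
  have ndEF : nondecreasing_seq (fun i => E `&` F i).
    move=> m n mn; rewrite subsetEset; apply: setIS.
    by have := ndF _ _ mn; rewrite subsetEset.
  have mEF i : measurable (E `&` F i) by exact: measurableI.
  have c2 : P \o (fun i => E `&` F i) @ \oo --> P (\bigcup_n (E `&` F n)) :=
    nondecreasing_cvg_mu mEF ltac:(by apply: bigcupT_measurable) ndEF.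
  have c3 : P \o (fun i => E `&` F i) @ \oo --> P E * P (\bigcup_n F n).
    have -> : P \o (fun i => E `&` F i) = (fun i => P E * (P \o F) i).
      by apply/funext => i /=; case: (HF i).
    by apply: cvgeZl => //; apply: finP.
  rewrite setI_bigcupr; exact: (cvg_unique _ c2 c3).
Qed.
End Dyn.


Section Core.
Local Open Scope ereal_scope.
Context d (T : measurableType d) (R : realType) (P : probability T R).

Lemma indep_mul_zero (Y Z : T -> R) :
  measurable_fun setT Y -> measurable_fun setT Z ->
  (forall A B, measurable A -> measurable B ->
     P (Y @^-1` A `&` Z @^-1` B) = P (Y @^-1` A) * P (Z @^-1` B)) ->
  P.-integrable setT (EFin \o Y) -> 'E_P[Y] = 0 ->
  P.-integrable setT (EFin \o (Y \* Z)%R) ->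
  'E_P[Y \* Z] = 0.
Proof.
move=> mYf mZf indYZ iY EY iYZ.
pose mY : {mfun T >-> R} := HB.pack Y (isMeasurableFun.Build _ _ _ _ Y mYf).
pose mZ : {mfun T >-> R} := HB.pack Z (isMeasurableFun.Build _ _ _ _ Z mZf).
pose W := fun w => (Y w, Z w).
have mWf : measurable_fun setT W by exact: measurable_fun_pair.
pose mW : {mfun T >-> (R * R)%type} := HB.pack W (isMeasurableFun.Build _ _ _ _ W mWf).
pose mu := distribution P mY.
pose nu := distribution P mZ.
pose J := distribution P mW.
have eqJ : forall A, measurable A -> J A = (mu \x nu) A.
  apply: (measure_unique [set A `*` B | A in measurable & B in measurable] (fun _ => setT)).
  - exact: measurable_prod_measurableType.
  - move=> _ _ [A1 mA1 [B1 mB1 <-]] [A2 mA2 [B2 mB2 <-]].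
    rewrite -setXI; exists (A1 `&` A2); first exact: measurableI.
    by exists (B1 `&` B2) => //; exact: measurableI.
  - by move=> _; exists setT => //; exists setT => //; rewrite setXTT.
  - by apply/seteqP; split => // x _; exists 0%N.
  - move=> _ [A mA [B mB <-]].
    transitivity (mu A * nu B); last by apply/esym/product_measure1E.
    rewrite /J /mu /nu /distribution /pushforward /=.
    by rewrite -indYZ.
  - by move=> _; rewrite -ge0_fin_numE; [apply: fin_num_measure|apply: measure_ge0].
pose g := fun z : R * R => (z.1 * z.2)%:E.
have mg : measurable_fun [set: (R * R)%type] g.
  by apply/measurable_EFinP; apply: measurable_funM.
have E1 : 'E_P[(Y \* Z)%R] = \int[J]_z g z.
  by rewrite unlock /J /distribution integral_pushforward //=.
have iJ : J.-integrable setT g.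
  by apply: integrable_pushforward => //; rewrite preimage_setT.
have iPr : (mu \x nu).-integrable setT g.
  move/integrableP: iJ => [_ iJ]; apply/integrableP; split => //.
  by rewrite (eq_measure_integral J) // => A mA _; apply/esym/eqJ.
have imu : mu.-integrable setT (EFin \o id).
  by apply: integrable_pushforward => //; apply/measurable_EFinP.
have Emu : \int[mu]_x (x%:E) = 0.
  by rewrite /mu /distribution integral_pushforward //= -EY unlock.
rewrite E1 (eq_measure_integral (mu \x nu)); last by move=> A mA _; apply: eqJ.
rewrite -integral21_prod_meas1 //.
rewrite /fubini_G.
transitivity (\int[nu]_y (cst 0 y)); last by rewrite integral0.
apply: eq_integral => y _ /=.
rewrite /g /=.
under eq_integral do rewrite EFinM.
by rewrite integralZr // Emu mul0e.
Qed.
End Core.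

Section PiSys.
Local Open Scope ereal_scope.
Context d (T : measurableType d) (R : realType) (P : probability T R).
Context (p : nat) (Psi : 'I_p -> T -> R).

Definition Pi (l : 'I_p) : set (set T) :=
  [set C | exists B : 'I_p -> set R, (forall i, measurable (B i)) /\
     C = \big[setI/setT]_(i | i != l) (Psi i @^-1` B i)].

Lemma Pi_setI l : setI_closed (Pi l).
Proof.
move=> _ _ [B1 [mB1 ->]] [B2 [mB2 ->]].
exists (fun i => B1 i `&` B2 i); split.
  by move=> i; exact: measurableI.
rewrite -big_split /=; apply: eq_bigr => i _.
by rewrite preimage_setI.
Qed.

Hypothesis mPsi : forall i, measurable_fun setT (Psi i).

Lemma Pi_meas l : Pi l `<=` measurable.
Proof.
move=> _ [B [mB ->]].
apply: big_ind => //; first by move=> *; exact: measurableI.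
by move=> i _; rewrite -[X in measurable X]setTI; apply: mPsi.
Qed.

Lemma sPi_meas l : <<s Pi l >> `<=` measurable.
Proof.
apply: smallest_sub; first exact: sigma_algebra_measurable.
exact: Pi_meas.
Qed.

Lemma Psi_meas_Pi l i : i != l ->
  measurable_fun [set: g_sigma_algebraType (Pi l)] (Psi i).
Proof.
move=> il _ B mB; rewrite setTI; apply: sub_sigma_algebra.
exists (fun k => if k == i then B else setT); split.
  by move=> k; case: ifP.
rewrite (bigD1 i) //= eqxx big1 ?setIT // => k /andP[_ ki].
by rewrite (negbTE ki) preimage_setT.
Qed.

Hypothesis indep : mutually_independent P Psi.

Lemma Pi_indep l (A : set R) : measurable A ->
  forall C, Pi l C -> P (Psi l @^-1` A `&` C) = P (Psi l @^-1` A) * P C.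
Proof.
move=> mA _ [B [mB ->]].
pose B' := fun i => if i == l then A else B i.
have mB' i : measurable (B' i) by rewrite /B'; case: ifP.
have h1 := indep.2 [set: 'I_p]%SET B' mB'.
have h2 := indep.2 [set i | i != l]%SET B mB.
have e1 : \big[setI/setT]_(i in [set: 'I_p]%SET) (Psi i @^-1` B' i) =
    Psi l @^-1` A `&` \big[setI/setT]_(i | i != l) (Psi i @^-1` B i).
  rewrite (bigD1 l) ?inE //= /B' eqxx; congr (_ `&` _).
  by apply: eq_big => [i|i /andP[_ il]]; rewrite ?inE ?(negbTE il).
have e2 : \big[setI/setT]_(i in [set i | i != l]%SET) (Psi i @^-1` B i) =
    \big[setI/setT]_(i | i != l) (Psi i @^-1` B i).
  by apply: eq_bigl => i; rewrite inE.
rewrite -e1 h1 -e2 h2 (bigD1 l) ?inE //= /B' eqxx; congr (_ * _).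
by apply: eq_big => [i|i /andP[_ il]]; rewrite ?inE ?(negbTE il).
Qed.

Lemma indep_zero l (h : T -> R) :
  measurable_fun [set: g_sigma_algebraType (Pi l)] h ->
  P.-integrable setT (EFin \o Psi l) -> 'E_P[Psi l] = 0 ->
  P.-integrable setT (EFin \o (Psi l \* h)%R) ->
  'E_P[(Psi l \* h)%R] = 0.
Proof.
move=> mh iY EY iYh.
have sh : forall B, measurable B -> <<s Pi l >> (h @^-1` B).
  by move=> B mB; rewrite -[h @^-1` B]setTI; apply: mh.
apply: indep_mul_zero => //.
- by move=> _ B mB; rewrite setTI; apply: sPi_meas; apply: sh.
- move=> A B mA mB.
  apply: (indep_lambda (G := Pi l)) => //.
  + by rewrite -[X in measurable X]setTI; apply: mPsi.
  + exact: Pi_setI.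
  + exact: Pi_meas.
  + exact: Pi_indep.
  + exact: sh.
Qed.

End PiSys.

Section Exp.
Context d (T : measurableType d) (R : realType) (P : probability T R).

Definition Ex (Y : T -> R) : R := fine ('E_P[Y])%E.
Local Notation int Y := (P.-integrable setT (EFin \o Y)).

Lemma ExE (Y : T -> R) : ('E_P[Y])%E = (\int[P]_w (Y w)%:E)%E.
Proof. by rewrite unlock. Qed.

Lemma int_fin (Y : T -> R) : int Y -> ('E_P[Y])%E \is a fin_num.
Proof. by move=> iY; rewrite ExE; exact: (integrable_fin_num measurableT iY). Qed.

Lemma int_sum (I : finType) (F : I -> T -> R) :
  (forall i, int (F i)) -> int (fun w => \sum_i F i w).
Proof.
move=> iF.
apply: (eq_integrable measurableT _ _ _ (integrable_sum measurableT (index_enum I) (P := xpredT)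
  (h := fun i w => (F i w)%:E) (fun i _ => iF i))).
by move=> w _ /=; rewrite sumEFin.
Qed.

Lemma int_scale (c : R) (Y : T -> R) : int Y -> int (fun w => c * Y w).
Proof.
move=> iY; apply: (eq_integrable measurableT _ _ _ (integrableZl measurableT c iY)).
by move=> w _ /=; rewrite EFinM.
Qed.

Lemma int_ext (Y Z : T -> R) : (forall w, Y w = Z w) -> int Y -> int Z.
Proof. by move=> YZ; apply: (eq_integrable measurableT) => // w _ /=; rewrite YZ. Qed.

Lemma Ex_ext (Y Z : T -> R) : (forall w, Y w = Z w) -> Ex Y = Ex Z.
Proof. by move=> YZ; rewrite (_ : Y = Z) //; apply/funext. Qed.

Lemma Ex_sum (I : finType) (F : I -> T -> R) :
  (forall i, int (F i)) -> Ex (fun w => \sum_i F i w) = \sum_i Ex (F i).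
Proof.
move=> iF; rewrite /Ex ExE.
under eq_integral do rewrite -sumEFin.
rewrite integral_sum //.
have -> : (\sum_i \int[P]_w (F i w)%:E)%E = (\sum_i Ex (F i))%:E.
  rewrite -sumEFin; apply: eq_bigr => i _.
  by rewrite fineK //; have := int_fin (iF i); rewrite ExE.
by [].
Qed.

Lemma Ex_scale (c : R) (Y : T -> R) : int Y ->
  Ex (fun w => c * Y w) = c * Ex Y.
Proof.
move=> iY; rewrite /Ex !ExE.
under eq_integral do rewrite EFinM.
rewrite integralZl // fineM //; have := int_fin iY; rewrite ExE; exact.
Qed.

Lemma Ex0 : Ex (fun _ => 0) = 0.
Proof. by rewrite /Ex (_ : (fun _ => 0) = cst 0) // expectation_cst. Qed.

Lemma int_mul2 (Y Z : T -> R) :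
  measurable_fun setT Y -> measurable_fun setT Z ->
  int (fun w => Y w ^+ 2) -> int (fun w => Z w ^+ 2) ->
  int (fun w => Y w * Z w).
Proof.
move=> mY mZ iY iZ.
have iYZ := integrableD measurableT iY iZ.
apply: (le_integrable measurableT _ _ iYZ) => //.
  by apply/measurable_EFinP; apply: measurable_funM.
move=> w _ /=; rewrite lee_fin normrM.
rewrite [`|_ + _|]ger0_norm; last by apply: addr_ge0; apply: sqr_ge0.
rewrite -[Y w ^+ 2]real_normK ?num_real // -[Z w ^+ 2]real_normK ?num_real //.
have := normr_ge0 (Y w); have := normr_ge0 (Z w).
set a := `|Y w|; set b := `|Z w| => b0 a0.
nra.
Qed.

End Exp.

Section Graph.
Context (p : nat) (pa : 'I_p -> 'I_p -> bool) (Hacyc : acyclic pa) (j : 'I_p).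

Definition inS (x : 'I_p) := ancestor pa x j || (x == j).

Lemma inS_parent i m : pa i m -> inS i -> ancestor pa m j.
Proof.
move=> him /orP[/existsP[x /andP[ix xj]] | /eqP eij].
- apply/existsP; exists i; rewrite /dag_edge him /=.
  exact: connect_trans (connect1 ix) xj.
- by apply/existsP; exists i; rewrite /dag_edge him eij connect0.
Qed.

Definition anc (i : 'I_p) : {set 'I_p} := [set x | ancestor pa x i]%SET.

Lemma anc_lt i m : pa i m -> (#|anc m| < #|anc i|)%N.
Proof.
move=> him; apply: proper_card; apply/fintype.properP; split.
  apply/fintype.subsetP => y; rewrite !inE => /existsP[x /andP[yx xm]].
  apply/existsP; exists x; rewrite yx /=.
  by apply: connect_trans xm (connect1 _); rewrite /dag_edge.
exists m; rewrite !inE.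
  by apply/existsP; exists i; rewrite /dag_edge him connect0.
apply/negP => /existsP[x /andP[mx xm]].
by have := Hacyc mx; rewrite xm.
Qed.

Lemma graph_zero (R : nzRingType) (theta : 'I_p -> 'I_p -> R) (N : 'M[R]_p) :
  (forall i a, i != a -> N i a = \sum_(m | pa i m) theta i m * N m a) ->
  forall i a, inS i -> ~~ inS a -> N i a = 0.
Proof.
move=> HN i a Si Sa.
suff H : forall n i, (#|anc i| <= n)%N -> inS i -> N i a = 0.
  exact: (H _ i (leqnn _) Si).
elim=> [|n IH] i' hi Si'.
- have i'a : i' != a by apply: contraNneq Sa => <-.
  rewrite HN // big1 // => m pim.
  by have := anc_lt pim; rewrite ltnNge (leq_trans hi (leq0n _)).
- have i'a : i' != a by apply: contraNneq Sa => <-.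
  rewrite HN // big1 // => m pim.
  rewrite (IH m) ?mulr0 //.
    by rewrite -ltnS (leq_trans (anc_lt pim) hi).
  by rewrite /inS (inS_parent pim Si').
Qed.

End Graph.

Unset Implicit Arguments.

Theorem theorem1 (d : measure_display) (T : measurableType d) (R : realType)
  (P : probability T R) (p : nat)
  (Psi : 'I_p -> T -> R) (pa : 'I_p -> 'I_p -> bool) (theta : 'I_p -> 'I_p -> R)
  (X : 'I_p -> T -> R) (f : R -> R) (j : 'I_p) :
  mutually_independent P Psi ->
  (forall i, P.-integrable setT (EFin \o Psi i)) ->
  (forall i, P.-integrable setT (EFin \o (Psi i ^+ 2))) ->
  (forall i, ('E_P[Psi i] = 0)%E) ->
  (forall i, (0 < 'V_P[Psi i])%E) ->
  acyclic pa ->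
  (forall i w, X i w = Psi i w + \sum_(k | pa i k) theta i k * X k w) ->
  measurable_fun setT f ->
  (forall k, P.-integrable setT (EFin \o (X k \* (f \o X j)))) ->
  forall k : 'I_p, ~~ ancestor pa k j -> k != j ->
    ols_coef P X f j k ord0 = 0.
Proof.
move=> Hind Hint1 Hint2 HE0 HV Hacyc HX Hf HXf k Hk1 Hk2.
have mPsi : forall i, measurable_fun setT (Psi i) := Hind.1.
have iPsi2 : forall a b, P.-integrable setT (EFin \o (fun w => Psi a w * Psi b w)).
  move=> a b; apply: int_mul2 => //.
    by apply: (int_ext _ (Hint2 a)) => w; rewrite !expr2.
  by apply: (int_ext _ (Hint2 b)) => w; rewrite !expr2.
pose Dd a := Ex P (fun w => Psi a w * Psi a w).
have Doff : forall a b, a != b -> Ex P (fun w => Psi a w * Psi b w) = 0.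
  move=> a b ab; rewrite /Ex.
  have mb : measurable_fun [set: g_sigma_algebraType (Pi Psi a)] (Psi b).
    by apply: Psi_meas_Pi; rewrite eq_sym.
  by have -> := indep_zero mPsi Hind mb (Hint1 a) (HE0 a) (iPsi2 a b).
have Dpos : forall a, 0 < Dd a.
  move=> a; rewrite /Dd /Ex.
  have := HV a; rewrite /variance covariance.unlock HE0 /=.
  have -> : ((Psi a \- cst 0) * (Psi a \- cst 0))%R = (fun w => Psi a w * Psi a w).
    by apply/funext => w; rewrite !fctE /= subr0.
  move=> h; apply: fine_gt0; rewrite h /=.
  by have := int_fin (iPsi2 a a); rewrite ge0_fin_numE ?(ltW h).
pose Mm : 'M[R]_p := \matrix_(i, m) ((i == m)%:R - (if pa i m then theta i m else 0)).
have Mrow : forall (v : 'I_p -> R) i,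
    \sum_m Mm i m * v m = v i - \sum_(m | pa i m) theta i m * v m.
  move=> v i.
  rewrite (eq_bigr (fun m => (i == m)%:R * v m - (if pa i m then theta i m else 0) * v m));
    last by move=> m _; rewrite mxE mulrBl.
  rewrite sumrB (bigD1 i) //= eqxx mul1r big1 ?addr0; last first.
    by move=> m /negbTE; rewrite eq_sym => ->; rewrite mul0r.
  congr (_ - _); rewrite [RHS]big_mkcond /=; apply: eq_bigr => m _.
  by case: ifP; rewrite ?mul0r.
have HPsi : forall i w, Psi i w = \sum_m Mm i m * X m w.
  by move=> i w; rewrite (Mrow (fun m => X m w)) (HX i w) addrK.
have Munit : Mm \in unitmx.
  rewrite -row_free_unit; apply: inj_row_free => u uM.
  apply/rowP => b; rewrite mxE.
  have e0 : forall w, \sum_i u 0 i * Psi i w = 0.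
    move=> w.
    rewrite (eq_bigr (fun i => \sum_m u 0 i * Mm i m * X m w)); last first.
      by move=> i _; rewrite HPsi mulr_sumr; apply: eq_bigr => m _; rewrite mulrA.
    rewrite exchange_big /= big1 // => m _.
    rewrite -mulr_suml.
    have := congr1 (fun M : 'rV_p => M 0 m) uM; rewrite !mxE => ->.
    by rewrite mul0r.
  have E1 : Ex P (fun w => \sum_i u 0 i * (Psi b w * Psi i w)) = u 0 b * Dd b.
    rewrite Ex_sum; last by move=> i; apply: int_scale.
    rewrite (bigD1 b) //= Ex_scale // big1 ?addr0 // => i ib.
    by rewrite Ex_scale // Doff ?mulr0 // eq_sym.
  have E2 : Ex P (fun w => \sum_i u 0 i * (Psi b w * Psi i w)) = 0.
    rewrite (_ : (fun w => \sum_i u 0 i * (Psi b w * Psi i w)) = fun _ => 0) ?Ex0 //.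
    apply/funext => w.
    transitivity (Psi b w * \sum_i u 0 i * Psi i w); last by rewrite e0 mulr0.
    by rewrite mulr_sumr; apply: eq_bigr => i _; rewrite mulrCA.
  move: E1; rewrite E2 => /esym/eqP; rewrite mulf_eq0 => /orP[/eqP //|].
  by rewrite gt_eqF.
pose N := invmx Mm.
have MN : Mm *m N = 1%:M := mulmxV Munit.
have NM : N *m Mm = 1%:M := mulVmx Munit.
have HXN : forall k1 w, X k1 w = \sum_a N k1 a * Psi a w.
  move=> k1 w.
  transitivity (\sum_m (N *m Mm) k1 m * X m w).
    rewrite NM (bigD1 k1) //= mxE eqxx mul1r big1 ?addr0 // => m mk.
    by rewrite mxE eq_sym (negbTE mk) mul0r.
  rewrite [RHS](eq_bigr (fun a => \sum_m N k1 a * (Mm a m * X m w))); last first.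
    by move=> a _; rewrite HPsi mulr_sumr.
  rewrite [RHS]exchange_big /=; apply: eq_bigr => m _.
  by rewrite mxE mulr_suml; apply: eq_bigr => a _; rewrite mulrA.
have Nzero : forall a, ~~ inS pa j a -> N j a = 0.
  move=> a Sa; apply: (graph_zero (j := j) Hacyc (theta := theta)) => //; last first.
    by rewrite /inS eqxx orbT.
  move=> i a' ia'; have := congr1 (fun M : 'M[R]_p => M i a') MN.
  rewrite !mxE (negbTE ia') (Mrow (fun m => N m a')) => /eqP.
  by rewrite subr_eq0 => /eqP.
have iPsif : forall i, P.-integrable setT (EFin \o (fun w => Psi i w * f (X j w))).
  move=> i.
  apply: (int_ext (Y := fun w => \sum_m Mm i m * (X m w * f (X j w)))).
    by move=> w; rewrite HPsi mulr_suml; apply: eq_bigr => m _; rewrite mulrA.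
  apply: int_sum => m; apply: int_scale.
  exact: (int_ext _ (HXf m)).
pose e i := Ex P (fun w => Psi i w * f (X j w)).
have ezero : forall i, ~~ inS pa j i -> e i = 0.
  move=> i Si; rewrite /e /Ex.
  have mh : measurable_fun [set: g_sigma_algebraType (Pi Psi i)] (f \o X j).
    have -> : f \o X j = f \o (fun w => \sum_a (if a == i then (fun _ => 0)
        else (fun w => N j a * Psi a w)) w).
      apply/funext => w /=; rewrite HXN; congr f; apply: eq_bigr => a _.
      by case: (a =P i) => // ->; rewrite Nzero // mul0r.
    apply: measurableT_comp => //; apply: measurable_sum => a.
    case: (a =P i) => ai.
      exact: (measurable_cst (T1 := g_sigma_algebraType (Pi Psi i)) (0:R)).
    apply: measurable_funM => //.
    by apply: Psi_meas_Pi; apply/eqP.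
  by have -> := indep_zero mPsi Hind mh (Hint1 i) (HE0 i) (iPsif i).
have Sig : second_moment P X = N *m diag_mx (\row_a Dd a) *m N^T.
  apply/matrixP => k1 k2; rewrite mul_mx_diag !mxE.
  transitivity (Ex P (X k1 \* X k2)%R); first by [].
  rewrite (Ex_ext P (Z := fun w => \sum_a \sum_b (N k1 a * N k2 b) * (Psi a w * Psi b w))); last first.
    move=> w /=; rewrite !HXN mulr_suml; apply: eq_bigr => a _.
    by rewrite mulr_sumr; apply: eq_bigr => b _; rewrite mulrACA.
  rewrite Ex_sum; last by move=> a; apply: int_sum => b; apply: int_scale.
  apply: eq_bigr => a _; rewrite !mxE.
  rewrite Ex_sum; last by move=> b; apply: int_scale.
  rewrite (bigD1 a) //= Ex_scale // big1 ?addr0; last first.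
    by move=> b ba; rewrite Ex_scale // Doff ?mulr0 // eq_sym.
  by rewrite /Dd mulrAC.
have Cr : cross_moment P X f j = N *m \col_a e a.
  apply/matrixP => k1 z; rewrite !mxE.
  transitivity (Ex P (X k1 \* (f \o X j))%R); first by [].
  rewrite (Ex_ext P (Z := fun w => \sum_a N k1 a * (Psi a w * f (X j w)))); last first.
    by move=> w /=; rewrite HXN mulr_suml; apply: eq_bigr => a _; rewrite mulrA.
  rewrite Ex_sum; last by move=> a; apply: int_scale.
  by apply: eq_bigr => a _; rewrite Ex_scale // mxE.
pose Dinv : 'rV[R]_p := \row_a (Dd a)^-1.
have DD : diag_mx (\row_a Dd a) *m diag_mx Dinv = 1%:M.
  apply/matrixP => a b; rewrite mul_diag_mx !mxE.
  case: (a =P b) => [->|ab]; last by rewrite mulr0n mulr0.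
  by rewrite !mulr1n mulfV // gt_eqF.
have SQ : second_moment P X *m (Mm^T *m diag_mx Dinv *m Mm) = 1%:M.
  rewrite Sig -!mulmxA (mulmxA N^T) -trmx_mul MN trmx1 mul1mx.
  by rewrite (mulmxA (diag_mx _)) DD mul1mx NM.
have Sunit : second_moment P X \in unitmx := (mulmx1_unit SQ).1.
have Sb : second_moment P X *m (Mm^T *m diag_mx Dinv *m \col_a e a) =
    cross_moment P X f j.
  rewrite Sig Cr -!mulmxA (mulmxA N^T) -trmx_mul MN trmx1 mul1mx.
  by rewrite (mulmxA (diag_mx _)) DD mul1mx.
rewrite /ols_coef -Sb mulKmx // mul_mx_diag !mxE big1 // => i _; rewrite !mxE.
have Sk : ~~ inS pa j k by rewrite /inS negb_or Hk1 Hk2.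
case: (boolP (inS pa j i)) => Si; last by rewrite ezero // mulr0.
have ik : (i == k) = false by apply: contraNF Sk => /eqP <-.
have pik : pa i k = false.
  by apply: contraNF Hk1 => pik; exact: inS_parent pik Si.
by rewrite ik pik subrr !mul0r.
Qed.
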